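(* Let $A\overset{i}{\to}U\overset{j}{\to}G$ be an extension of a semilattice of groups $A$ by a group $G$. Then there exist an inverse semigroup $S$ and epimorphisms $\pi:U\to S$, $\kappa:S\to G$ such that (i) $A\overset{i}{\to}U\overset{\pi}{\to}S$ is an extension of $A$ by $S$, and (ii) $j=\kappa\circ\pi$. Moreover, whenever $S,\pi,\kappa$ satisfy (i) and (ii), then (iii) $S$ is $E$-unitary and (iv) $\ker\kappa=\sigma$ (the minimum group congruence on $S$).
   Context: A semilattice of groups is an inverse semigroup whose idempotents are central. An extension of $A$ by a group $G$ is an inverse semigroup $U$ with a monomorphism $i:A\to U$ and an epimorphism $j:U\to G$ with $i(A)=j^{-1}(1)$. An extension of $A$ by an inverse semigroup $S$ is an inverse semigroup $U$ with a monomorphism $i:A\to U$ and an idempotent-separating epimorphism $\pi:U\to S$ with $i(A)=\pi^{-1}(E(S))$. For an inverse semigroup $S$, $\sigma$ is given by $(s,t)\in\sigma$ iff $es=et$ for some $e\in E(S)$; $S$ is $E$-unitary if $e\le s$ with $e\in E(S)$ implies $s\in E(S)$; $\ker\kappa=\{(s,t):\kappa(s)=\kappa(t)\}$. *)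

(* Defs.v *)
(* An inverse semigroup, presented with its (unique) inversion: a regular
   semigroup (x x^-1 x = x, x^-1 x x^-1 = x^-1) whose idempotents commute. *)
Record InvSemigroup : Type := {
  isg_car :> Type;
  isg_mul : isg_car -> isg_car -> isg_car;
  isg_inv : isg_car -> isg_car;
  isg_assoc : forall x y z, isg_mul x (isg_mul y z) = isg_mul (isg_mul x y) z;
  isg_reg1 : forall x, isg_mul (isg_mul x (isg_inv x)) x = x;
  isg_reg2 : forall x, isg_mul (isg_mul (isg_inv x) x) (isg_inv x) = isg_inv x;
  isg_idem_comm : forall e f, isg_mul e e = e -> isg_mul f f = f ->
                   isg_mul e f = isg_mul f e
}.

Record Group : Type := {
  grp_car :> Type;
  grp_mul : grp_car -> grp_car -> grp_car;
  grp_one : grp_car;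
  grp_inv : grp_car -> grp_car;
  grp_assoc : forall x y z, grp_mul x (grp_mul y z) = grp_mul (grp_mul x y) z;
  grp_mul1 : forall x, grp_mul grp_one x = x;
  grp_mulr1 : forall x, grp_mul x grp_one = x;
  grp_mulV : forall x, grp_mul (grp_inv x) x = grp_one;
  grp_mulrV : forall x, grp_mul x (grp_inv x) = grp_one
}.

Definition idem (S : InvSemigroup) (e : S) : Prop := isg_mul S e e = e.

Definition semilattice_of_groups (S : InvSemigroup) : Prop :=
  forall e x : S, idem S e -> isg_mul S e x = isg_mul S x e.

Definition isg_hom (S T : InvSemigroup) (f : S -> T) : Prop :=
  forall x y, f (isg_mul S x y) = isg_mul T (f x) (f y).
Definition isg_grp_hom (S : InvSemigroup) (G : Group) (f : S -> G) : Prop :=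
  forall x y, f (isg_mul S x y) = grp_mul G (f x) (f y).

Definition injective {X Y : Type} (f : X -> Y) : Prop :=
  forall x y, f x = f y -> x = y.
Definition surjective {X Y : Type} (f : X -> Y) : Prop :=
  forall y, exists x, f x = y.

Definition group_extension (A U : InvSemigroup) (G : Group)
  (i : A -> U) (j : U -> G) : Prop :=
  isg_hom A U i /\ injective i /\
  isg_grp_hom U G j /\ surjective j /\
  (forall u : U, (exists a, i a = u) <-> j u = grp_one G).

Definition idem_separating (U S : InvSemigroup) (p : U -> S) : Prop :=
  forall e f : U, idem U e -> idem U f -> p e = p f -> e = f.

Definition isg_extension (A U S : InvSemigroup) (i : A -> U) (p : U -> S) : Prop :=
  isg_hom A U i /\ injective i /\
  isg_hom U S p /\ surjective p /\ idem_separating U S p /\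
  (forall u : U, (exists a, i a = u) <-> idem S (p u)).

Definition nat_le (S : InvSemigroup) (s t : S) : Prop :=
  exists e, idem S e /\ s = isg_mul S e t.

Definition E_unitary (S : InvSemigroup) : Prop :=
  forall e s : S, idem S e -> nat_le S e s -> idem S s.

Definition sigma (S : InvSemigroup) (s t : S) : Prop :=
  exists e, idem S e /\ isg_mul S e s = isg_mul S e t.

(* Main.v *)
Require Import Defs.
From Stdlib Require Import ProofIrrelevance ClassicalEpsilon.

Notation "x ** y" := (isg_mul _ x y) (at level 40, left associativity).
Notation iv x := (isg_inv _ x).

Lemma A_ (S : InvSemigroup) (x y z : S) : x ** (y ** z) = x ** y ** z.
Proof. apply isg_assoc. Qed.

Ltac assoc := rewrite ?A_; reflexivity.

Lemma idem_l (S : InvSemigroup) (x : S) : idem S (x ** iv x).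
Proof. unfold idem. transitivity (x ** iv x ** x ** iv x). assoc. rewrite isg_reg1. reflexivity. Qed.
Lemma idem_r (S : InvSemigroup) (x : S) : idem S (iv x ** x).
Proof. unfold idem. transitivity (iv x ** x ** iv x ** x). assoc. rewrite isg_reg2. reflexivity. Qed.
Lemma ic (S : InvSemigroup) (e f : S) : idem S e -> idem S f -> e ** f = f ** e.
Proof. apply isg_idem_comm. Qed.

Lemma inv_uniq (S : InvSemigroup) (x y : S) :
  x ** y ** x = x -> y ** x ** y = y -> y = iv x.
Proof.
  intros H1 H2.
  assert (Ie1 : idem S (y ** x)).
  { unfold idem. transitivity (y ** x ** y ** x). assoc. rewrite H2. reflexivity. }
  assert (Ie3 : idem S (x ** y)).
  { unfold idem. transitivity (x ** y ** x ** y). assoc. rewrite H1. reflexivity. }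
  assert (Ia : y ** x = y ** x ** (iv x ** x)).
  { transitivity (y ** (x ** iv x ** x)). rewrite isg_reg1. reflexivity. assoc. }
  assert (Ib : x ** y = x ** iv x ** (x ** y)).
  { transitivity ((x ** iv x ** x) ** y). rewrite isg_reg1. reflexivity. assoc. }
  assert (Y1 : y = iv x ** x ** y).
  { transitivity (y ** x ** y). symmetry; exact H2.
    rewrite Ia. rewrite (ic _ _ _ Ie1 (idem_r _ x)).
    transitivity (iv x ** x ** (y ** x ** y)). assoc. rewrite H2. reflexivity. }
  assert (Y2 : y = y ** (x ** iv x)).
  { transitivity (y ** (x ** y)). rewrite A_. symmetry; exact H2.
    rewrite Ib. rewrite <- (ic _ _ _ Ie3 (idem_l _ x)).
    transitivity (y ** x ** y ** (x ** iv x)). assoc. rewrite H2. reflexivity. }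
  transitivity (iv x ** x ** (y ** (x ** iv x))).
  { rewrite <- Y2. exact Y1. }
  transitivity (iv x ** (x ** y ** x) ** iv x). assoc.
  rewrite H1. apply isg_reg2.
Qed.

Lemma inv_inv (S : InvSemigroup) (x : S) : iv (iv x) = x.
Proof. symmetry. apply inv_uniq. apply isg_reg2. apply isg_reg1. Qed.

Lemma inv_idem (S : InvSemigroup) (e : S) : idem S e -> iv e = e.
Proof. unfold idem; intro H. symmetry. apply inv_uniq; rewrite !H; reflexivity. Qed.

Lemma inv_mul (S : InvSemigroup) (x y : S) : iv (x ** y) = iv y ** iv x.
Proof.
  symmetry. apply inv_uniq.
  - transitivity (x ** ((y ** iv y) ** (iv x ** x)) ** y). assoc.
    rewrite (ic _ _ _ (idem_l _ y) (idem_r _ x)).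
    transitivity ((x ** iv x ** x) ** (y ** iv y ** y)). assoc.
    rewrite !isg_reg1. reflexivity.
  - transitivity (iv y ** ((iv x ** x) ** (y ** iv y)) ** iv x). assoc.
    rewrite (ic _ _ _ (idem_r _ x) (idem_l _ y)).
    transitivity ((iv y ** y ** iv y) ** (iv x ** x ** iv x)). assoc.
    rewrite !isg_reg2. reflexivity.
Qed.

Lemma hom_inv (S T : InvSemigroup) (f : S -> T) : isg_hom S T f ->
  forall x, f (iv x) = iv (f x).
Proof.
  intros Hf x. apply inv_uniq; rewrite <- !Hf.
  rewrite isg_reg1; reflexivity. rewrite isg_reg2; reflexivity.
Qed.

Lemma g_inv_uniq (G : Group) (x y : G) : grp_mul G x y = grp_one G -> y = grp_inv G x.
Proof.
  intro H. rewrite <- (grp_mul1 G y), <- (grp_mulV G x), <- grp_assoc, H, grp_mulr1. reflexivity.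
Qed.
Lemma g_idem (G : Group) (x : G) : grp_mul G x x = x -> x = grp_one G.
Proof.
  intro H. rewrite <- (grp_mulrV G x).
  transitivity (grp_mul G (grp_mul G x x) (grp_inv G x)).
  rewrite <- grp_assoc, grp_mulrV, grp_mulr1. reflexivity.
  rewrite H. reflexivity.
Qed.
Lemma g_hom_inv (S : InvSemigroup) (G : Group) (f : S -> G) : isg_grp_hom S G f ->
  forall x, f (iv x) = grp_inv G (f x).
Proof.
  intros Hf x. apply g_inv_uniq.
  assert (H : grp_mul G (grp_mul G (f x) (f (iv x))) (f x) = f x).
  { rewrite <- !Hf, isg_reg1. reflexivity. }
  rewrite <- (grp_mulr1 G (grp_mul G (f x) (f (iv x)))).
  rewrite <- (grp_mulrV G (f x)). rewrite grp_assoc, H. reflexivity.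
Qed.

Lemma clif_A (A : InvSemigroup) : semilattice_of_groups A ->
  forall c : A, c ** iv c = iv c ** c.
Proof.
  intros HSL c.
  assert (E1 : c ** iv c = iv c ** c ** (c ** iv c)).
  { transitivity (c ** (iv c ** c) ** iv c). rewrite A_, isg_reg1; reflexivity.
    rewrite <- (HSL _ c (idem_r _ c)). assoc. }
  assert (E2 : iv c ** c = c ** iv c ** (iv c ** c)).
  { transitivity (iv c ** (c ** iv c) ** c). rewrite A_, isg_reg2; reflexivity.
    rewrite <- (HSL _ (iv c) (idem_l _ c)). assoc. }
  rewrite E1, (ic _ _ _ (idem_r _ c) (idem_l _ c)), <- E2. reflexivity.
Qed.


Lemma j_one_of_idem (U : InvSemigroup) (G : Group) (j : U -> G) :
  isg_grp_hom U G j -> forall e, idem U e -> j e = grp_one G.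
Proof. intros Hj e He. apply g_idem. rewrite <- Hj, He. reflexivity. Qed.

Lemma central_U (A U : InvSemigroup) (G : Group) (i : A -> U) (j : U -> G) :
  semilattice_of_groups A -> group_extension A U G i j ->
  forall e u, idem U e -> j u = grp_one G -> e ** u = u ** e.
Proof.
  intros HSL (Hi & Hinj & Hj & Hsj & Hk) e u He Hu.
  destruct (proj2 (Hk e) (j_one_of_idem _ _ _ Hj e He)) as [b Hb].
  destruct (proj2 (Hk u) Hu) as [c Hc]. subst.
  assert (Ib : idem A b). { apply Hinj. unfold idem. rewrite Hi. exact He. }
  rewrite <- !Hi, (HSL _ _ Ib). reflexivity.
Qed.

Lemma clif_U (A U : InvSemigroup) (G : Group) (i : A -> U) (j : U -> G) :
  semilattice_of_groups A -> group_extension A U G i j ->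
  forall u, j u = grp_one G -> u ** iv u = iv u ** u.
Proof.
  intros HSL (Hi & Hinj & Hj & Hsj & Hk) u Hu.
  destruct (proj2 (Hk u) Hu) as [c Hc]. subst.
  rewrite <- (hom_inv _ _ _ Hi), <- !Hi, (clif_A _ HSL). reflexivity.
Qed.

Definition eqP (U : InvSemigroup) (G : Group) (j : U -> G) (u v : U) : Prop :=
  j u = j v /\ u ** iv u = v ** iv v.


Lemma ker_a (U : InvSemigroup) (G : Group) (j : U -> G) : isg_grp_hom U G j ->
  forall u v, j u = j v -> j (iv v ** u) = grp_one G.
Proof.
  intros Hj u v H. rewrite Hj, (g_hom_inv _ _ _ Hj), H. apply grp_mulV.
Qed.

Lemma cong_r (A U : InvSemigroup) (G : Group) (i : A -> U) (j : U -> G) :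
  semilattice_of_groups A -> group_extension A U G i j ->
  forall u v w, eqP U G j u v -> (u ** w) ** iv (u ** w) = (v ** w) ** iv (v ** w).
Proof.
  intros HSL HE u v w [H1 H2].
  pose proof HE as (Hi & Hinj & Hj & Hsj & Hk).
  set (a := iv v ** u).
  assert (Ja : j a = grp_one G) by (apply ker_a; auto).
  assert (Hu : u = v ** a).
  { unfold a. rewrite A_, <- H2, isg_reg1. reflexivity. }
  assert (Haa : a ** iv a = iv v ** v).
  { unfold a. rewrite inv_mul, inv_inv.
    transitivity (iv v ** (u ** iv u) ** v). assoc.
    rewrite H2. transitivity (iv v ** v ** iv v ** v). assoc.
    rewrite isg_reg2; reflexivity. }
  transitivity (v ** a ** w ** iv (v ** a ** w)). rewrite <- Hu. reflexivity.
  rewrite !inv_mul.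
  transitivity (v ** (a ** (w ** iv w)) ** iv a ** iv v). assoc.
  rewrite <- (central_U _ _ _ i j HSL HE (w ** iv w) a (idem_l _ w) Ja).
  transitivity (v ** (w ** iv w) ** (a ** iv a) ** iv v). assoc.
  rewrite Haa. transitivity (v ** (w ** iv w) ** (iv v ** v ** iv v)). assoc.
  rewrite isg_reg2. assoc.
Qed.

Lemma cong_l (U : InvSemigroup) (G : Group) (j : U -> G) :
  forall u v w, eqP U G j u v -> (w ** u) ** iv (w ** u) = (w ** v) ** iv (w ** v).
Proof.
  intros u v w [H1 H2]. rewrite !inv_mul.
  transitivity (w ** (u ** iv u) ** iv w). assoc. rewrite H2. assoc.
Qed.

Lemma cong_inv (A U : InvSemigroup) (G : Group) (i : A -> U) (j : U -> G) :
  semilattice_of_groups A -> group_extension A U G i j ->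
  forall u v, eqP U G j u v -> iv u ** u = iv v ** v.
Proof.
  intros HSL HE u v [H1 H2].
  pose proof HE as (Hi & Hinj & Hj & Hsj & Hk).
  set (a := iv v ** u).
  assert (Ja : j a = grp_one G) by (apply ker_a; auto).
  assert (Haa : a ** iv a = iv v ** v).
  { unfold a. rewrite inv_mul, inv_inv.
    transitivity (iv v ** (u ** iv u) ** v). assoc.
    rewrite H2. transitivity (iv v ** v ** iv v ** v). assoc.
    rewrite isg_reg2; reflexivity. }
  assert (Haa' : iv a ** a = iv u ** u).
  { unfold a. rewrite inv_mul, inv_inv.
    transitivity (iv u ** (v ** iv v) ** u). assoc.
    rewrite <- H2. transitivity (iv u ** u ** iv u ** u). assoc.
    rewrite isg_reg2; reflexivity. }
  rewrite <- Haa, <- Haa'. symmetry. exact (clif_U _ _ _ i j HSL HE a Ja).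
Qed.

Definition Pv (U : InvSemigroup) (G : Group) (j : U -> G) (u : U) : (grp_car G * isg_car U)%type :=
  (j u, u ** iv u).
Definition Scar (U : InvSemigroup) (G : Group) (j : U -> G) : Type :=
  { x : (grp_car G * isg_car U)%type | exists u, x = Pv U G j u }.
Definition pS (U : InvSemigroup) (G : Group) (j : U -> G) (u : U) : Scar U G j :=
  exist _ (Pv U G j u) (ex_intro _ u eq_refl).
Definition rep (U : InvSemigroup) (G : Group) (j : U -> G) (s : Scar U G j) : U :=
  proj1_sig (constructive_indefinite_description _ (proj2_sig s)).

Lemma rep_spec (U : InvSemigroup) (G : Group) (j : U -> G) (s : Scar U G j) : pS U G j (rep U G j s) = s.
Proof.
  unfold rep. destruct (constructive_indefinite_description _ _) as [u Hu]. simpl.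
  destruct s as [x hx]. unfold pS. simpl in Hu. subst x.
  f_equal. apply proof_irrelevance.
Qed.

Lemma pS_eq (U : InvSemigroup) (G : Group) (j : U -> G) (u v : U) : eqP U G j u v -> pS U G j u = pS U G j v.
Proof.
  intros [H1 H2]. unfold pS.
  assert (E : Pv U G j u = Pv U G j v) by (unfold Pv; rewrite H1, H2; reflexivity).
  apply eq_sig_hprop; [intros; apply proof_irrelevance | simpl; exact E].
Qed.

Lemma pS_eqP (U : InvSemigroup) (G : Group) (j : U -> G) (u v : U) : pS U G j u = pS U G j v -> eqP U G j u v.
Proof.
  intro H. apply (f_equal (@proj1_sig _ _)) in H. simpl in H. unfold Pv in H.
  injection H; intros; split; assumption.
Qed.

Lemma pS_surj (U : InvSemigroup) (G : Group) (j : U -> G) (s : Scar U G j) : exists u, s = pS U G j u.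
Proof. exists (rep U G j s). symmetry. apply rep_spec. Qed.

Definition mulS U G j (s t : Scar U G j) : Scar U G j :=
  pS U G j (rep U G j s ** rep U G j t).
Definition invS U G j (s : Scar U G j) : Scar U G j :=
  pS U G j (iv (rep U G j s)).
Definition kS U G j (s : Scar U G j) : G := fst (proj1_sig s).

Lemma mul_pS (A U : InvSemigroup) (G : Group) (i : A -> U) (j : U -> G) :
  semilattice_of_groups A -> group_extension A U G i j ->
  forall u v, mulS U G j (pS U G j u) (pS U G j v) = pS U G j (u ** v).
Proof.
  intros HSL HE u v. pose proof HE as (Hi & Hinj & Hj & Hsj & Hk).
  unfold mulS. apply pS_eq.
  pose proof (pS_eqP _ _ _ _ _ (rep_spec U G j (pS U G j u))) as Eu.
  pose proof (pS_eqP _ _ _ _ _ (rep_spec U G j (pS U G j v))) as Ev.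
  set (u0 := rep U G j (pS U G j u)) in *. set (v0 := rep U G j (pS U G j v)) in *.
  split.
  - rewrite !Hj, (proj1 Eu), (proj1 Ev). reflexivity.
  - rewrite (cong_r _ _ _ i j HSL HE u0 u v0 Eu). exact (cong_l U G j _ _ _ Ev).
Qed.

Lemma inv_pS (A U : InvSemigroup) (G : Group) (i : A -> U) (j : U -> G) :
  semilattice_of_groups A -> group_extension A U G i j ->
  forall u, invS U G j (pS U G j u) = pS U G j (iv u).
Proof.
  intros HSL HE u. pose proof HE as (Hi & Hinj & Hj & Hsj & Hk).
  unfold invS. apply pS_eq.
  pose proof (pS_eqP _ _ _ _ _ (rep_spec U G j (pS U G j u))) as Eu.
  set (u0 := rep U G j (pS U G j u)) in *.
  split.
  - rewrite !(g_hom_inv _ _ _ Hj), (proj1 Eu). reflexivity.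
  - rewrite !inv_inv. apply (cong_inv _ _ _ i j HSL HE). exact Eu.
Qed.

Ltac dsurj s := let u := fresh "u" in destruct (pS_surj _ _ _ s) as [u ->].


Lemma S_assoc (A U : InvSemigroup) (G : Group) (i : A -> U) (j : U -> G)
  (HSL : semilattice_of_groups A) (HE : group_extension A U G i j) :
  forall x y z, mulS U G j x (mulS U G j y z) = mulS U G j (mulS U G j x y) z.
Proof.
  intros x y z. dsurj x. dsurj y. dsurj z.
  rewrite !(mul_pS _ _ _ i j HSL HE), isg_assoc. reflexivity.
Qed.

Lemma S_reg1 (A U : InvSemigroup) (G : Group) (i : A -> U) (j : U -> G)
  (HSL : semilattice_of_groups A) (HE : group_extension A U G i j) :
  forall x, mulS U G j (mulS U G j x (invS U G j x)) x = x.
Proof.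
  intros x. dsurj x.
  rewrite (inv_pS _ _ _ i j HSL HE), !(mul_pS _ _ _ i j HSL HE), isg_reg1. reflexivity.
Qed.

Lemma S_reg2 (A U : InvSemigroup) (G : Group) (i : A -> U) (j : U -> G)
  (HSL : semilattice_of_groups A) (HE : group_extension A U G i j) :
  forall x, mulS U G j (mulS U G j (invS U G j x) x) (invS U G j x) = invS U G j x.
Proof.
  intros x. dsurj x.
  rewrite (inv_pS _ _ _ i j HSL HE), !(mul_pS _ _ _ i j HSL HE), isg_reg2. reflexivity.
Qed.

Lemma idem_pS_one (A U : InvSemigroup) (G : Group) (i : A -> U) (j : U -> G)
  (HSL : semilattice_of_groups A) (HE : group_extension A U G i j) :
  forall u, mulS U G j (pS U G j u) (pS U G j u) = pS U G j u -> j u = grp_one G.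
Proof.
  intros u H. pose proof HE as (Hi & Hinj & Hj & Hsj & Hk).
  rewrite (mul_pS _ _ _ i j HSL HE) in H. apply pS_eqP in H.
  apply g_idem. rewrite <- Hj. exact (proj1 H).
Qed.

Lemma S_idem_comm (A U : InvSemigroup) (G : Group) (i : A -> U) (j : U -> G)
  (HSL : semilattice_of_groups A) (HE : group_extension A U G i j) :
  forall e f, mulS U G j e e = e -> mulS U G j f f = f ->
    mulS U G j e f = mulS U G j f e.
Proof.
  intros e f. dsurj e. dsurj f. intros He Hf.
  pose proof HE as (Hi & Hinj & Hj & Hsj & Hk).
  apply (idem_pS_one _ _ _ i j HSL HE) in He. apply (idem_pS_one _ _ _ i j HSL HE) in Hf.
  rewrite !(mul_pS _ _ _ i j HSL HE). apply pS_eq. split.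
  - rewrite !Hj, He, Hf. reflexivity.
  - rewrite !inv_mul.
    transitivity (u ** (u0 ** iv u0) ** iv u). assoc.
    rewrite <- (central_U _ _ _ i j HSL HE _ u (idem_l _ u0) He).
    transitivity ((u0 ** iv u0) ** (u ** iv u)). assoc.
    rewrite (ic _ _ _ (idem_l _ u0) (idem_l _ u)).
    transitivity ((u ** iv u) ** u0 ** iv u0). assoc.
    rewrite (central_U _ _ _ i j HSL HE _ u0 (idem_l _ u) Hf). assoc.
Qed.

Lemma idem_mul (S : InvSemigroup) (a b : S) : idem S a -> idem S b -> idem S (a ** b).
Proof.
  intros Ha Hb. unfold idem.
  transitivity (a ** (b ** a) ** b). assoc. rewrite (ic _ _ _ Hb Ha).
  transitivity ((a ** a) ** (b ** b)). assoc. rewrite Ha, Hb. reflexivity.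
Qed.

Lemma part2 (A U : InvSemigroup) (G : Group) (i : A -> U) (j : U -> G) :
  group_extension A U G i j ->
  forall (S : InvSemigroup) (p : U -> S) (k : S -> G),
      isg_grp_hom S G k ->
      isg_extension A U S i p ->
      (forall u, j u = k (p u)) ->
      E_unitary S /\ (forall s t : S, k s = k t <-> sigma S s t).
Proof.
  intros HE S p k Hk (Hi & Hinj & Hp & Hps & Hsep & Hext) Hjk.
  pose proof HE as (_ & _ & Hj & Hsj & HkE).
  assert (K1 : forall x : S, k x = grp_one G -> idem S x).
  { intros x Hx. destruct (Hps x) as [u <-]. apply Hext. apply (proj2 (HkE u)).
    rewrite Hjk; exact Hx. }
  assert (K2 : forall e, idem S e -> k e = grp_one G).
  { intros e He. apply g_idem. rewrite <- Hk, He. reflexivity. }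
  split.
  - intros e s He [f [Hf Hes]]. apply K1.
    assert (E : k e = grp_mul G (k f) (k s)) by (rewrite Hes; apply Hk).
    rewrite (K2 e He), (K2 f Hf), grp_mul1 in E. symmetry; exact E.
  - intros s t; split.
    + intro Hst. set (g := iv s ** t).
      assert (Hg : idem S g).
      { apply K1. unfold g. rewrite Hk, (g_hom_inv _ _ _ Hk), Hst. apply grp_mulV. }
      assert (Hg' : iv t ** s = g).
      { rewrite <- (inv_idem _ _ Hg). unfold g. rewrite inv_mul, inv_inv. reflexivity. }
      set (e' := t ** iv t ** (s ** iv s)).
      assert (He' : idem S e') by (apply idem_mul; apply idem_l).
      exists e'. split; [exact He'|].
      assert (Es : e' ** s = t ** g).
      { unfold e'. transitivity (t ** iv t ** (s ** iv s ** s)). assoc.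
        rewrite isg_reg1, <- Hg'. assoc. }
      assert (Et : e' ** t = s ** g).
      { unfold e'. rewrite (ic _ _ _ (idem_l _ t) (idem_l _ s)).
        transitivity (s ** iv s ** (t ** iv t ** t)). assoc.
        rewrite isg_reg1. unfold g. assoc. }
      transitivity (e' ** e' ** s). rewrite He'. reflexivity.
      transitivity (e' ** (e' ** s)). assoc. rewrite Es.
      transitivity (e' ** t ** g). assoc. rewrite Et.
      transitivity (s ** (g ** g)). assoc. rewrite Hg. reflexivity.
    + intros [e [He Heq]].
      assert (E : grp_mul G (k e) (k s) = grp_mul G (k e) (k t)) by (rewrite <- !Hk, Heq; reflexivity).
      rewrite (K2 e He), !grp_mul1 in E. exact E.
Qed.

Theorem proposition4p5 (A U : InvSemigroup) (G : Group)
  (i : A -> U) (j : U -> G) :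
  semilattice_of_groups A ->
  group_extension A U G i j ->
  (exists (S : InvSemigroup) (p : U -> S) (k : S -> G),
      surjective p /\ isg_grp_hom S G k /\ surjective k /\
      isg_extension A U S i p /\
      (forall u, j u = k (p u)))
  /\
  (forall (S : InvSemigroup) (p : U -> S) (k : S -> G),
      isg_grp_hom S G k ->
      isg_extension A U S i p ->
      (forall u, j u = k (p u)) ->
      E_unitary S /\ (forall s t : S, k s = k t <-> sigma S s t)).
Proof.
  intros HSL HE. split; [| exact (part2 A U G i j HE)].
  pose proof HE as (Hi & Hinj & Hj & Hsj & HkE).
  exists (Build_InvSemigroup (Scar U G j) (mulS U G j) (invS U G j)
            (S_assoc A U G i j HSL HE) (S_reg1 A U G i j HSL HE)
            (S_reg2 A U G i j HSL HE) (S_idem_comm A U G i j HSL HE)).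
  exists (pS U G j), (kS U G j).
  assert (Hsurj : surjective (pS U G j)).
  { intro s. destruct (pS_surj U G j s) as [u ->]. exists u; reflexivity. }
  split; [exact Hsurj|]. split.
  { intros x y. simpl. destruct (pS_surj U G j x) as [u ->].
    destruct (pS_surj U G j y) as [v ->].
    rewrite (mul_pS _ _ _ i j HSL HE). apply Hj. }
  split.
  { intro g. destruct (Hsj g) as [u <-]. exists (pS U G j u). reflexivity. }
  split; [| intro u; reflexivity].
  split; [exact Hi|]. split; [exact Hinj|]. split.
  { intros x y. simpl. symmetry. apply (mul_pS _ _ _ i j HSL HE). }
  split; [exact Hsurj|]. split.
  { intros e f He Hf H. apply pS_eqP in H. destruct H as [_ H].
    rewrite !inv_idem in H by assumption. rewrite He, Hf in H. exact H. }
  intro u. unfold idem. simpl. rewrite (mul_pS _ _ _ i j HSL HE). split.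
  - intro Ha. pose proof (proj1 (HkE u) Ha) as Ju. apply pS_eq. split.
    + rewrite Hj, Ju. apply grp_mul1.
    + rewrite inv_mul.
      transitivity (u ** (u ** iv u) ** iv u). assoc.
      transitivity (u ** (iv u ** u) ** iv u).
      { rewrite (clif_U _ _ _ i j HSL HE u Ju). reflexivity. }
      transitivity ((u ** iv u ** u) ** iv u). assoc. rewrite isg_reg1. reflexivity.
  - intro H. apply (proj2 (HkE u)). apply pS_eqP in H. destruct H as [H _].
    apply g_idem. rewrite <- Hj. exact H.
Qed.
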